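(* On $\hat N^{\bullet}_*=\bigcup_{n\ge1}\hat N^n$, with $+_{\nearrow}:=\nearrow$ and $+_{\nwarrow}:=\nwarrow$, the operation $\tilde\ltimes$ and the involution $\dagger$: (i) $\tilde\ltimes$ maps $\hat N^n\times\hat N^m$ into $\hat N^{nm}$, is associative, and is left distributive: $(\vec u+_{\nearrow}\vec v)\tilde\ltimes\vec w=(\vec u\tilde\ltimes\vec w)+_{\nearrow}(\vec v\tilde\ltimes\vec w)$ and $(\vec u+_{\nwarrow}\vec v)\tilde\ltimes\vec w=(\vec u\tilde\ltimes\vec w)+_{\nwarrow}(\vec v\tilde\ltimes\vec w)$; (ii) for all names $\vec u,\vec v$: $(\vec u+_{\nearrow}\vec v)^\dagger=\vec v^\dagger+_{\nwarrow}\vec u^\dagger$, $(\vec u+_{\nwarrow}\vec v)^\dagger=\vec v^\dagger+_{\nearrow}\vec u^\dagger$, and $(\vec u\tilde\ltimes\vec v)^\dagger=\vec u^\dagger\tilde\ltimes\vec v^\dagger$.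
   Context: $\hat N^n$ ($n\ge1$) is the set of names of planar rooted binary trees with $n$ internal vertices and $\hat N^0=\{()\}$ (the empty vector, name of the trivial tree). Equivalently, recursively: every element of $\hat N^n$, $n\ge1$, is uniquely of the form $\vec v_l\vee\vec v_r:=(\vec v_l,1,p+1+\vec v_r)$ with $\vec v_l\in\hat N^p$, $\vec v_r\in\hat N^q$, $p+q+1=n$, where $k+(w_1,\dots,w_q)=(w_1+k,\dots,w_q+k)$. For $\vec v\in\hat N^n,\vec w\in\hat N^m$: $\vec v\nearrow\vec w=(\vec v,n\triangleright w_1,\dots,n\triangleright w_m)$ with $n\triangleright a=a+n$ for $a\ne1$, $n\triangleright1=1$; $\vec v\nwarrow\vec w=(\vec v,n+\vec w)$; the empty vector $()$ is a two-sided unit for both. These satisfy $\vec v_l\vee\vec v_r=\vec v_l\nearrow(1)\nwarrow\vec v_r$. Universal expression: for a name $\vec v$ and a name $\vec x$ of degree $\ge1$, $\varpi_{()}(\vec x)=()$ and $\varpi_{\vec v}(\vec x)=\varpi_{\vec v_l}(\vec x)\nearrow\vec x\nwarrow\varpi_{\vec v_r}(\vec x)$ for $\vec v=\vec v_l\vee\vec v_r$. $L$-multiplication: $\vec u\tilde\ltimes\vec v:=\varpi_{\vec u}(\vec v)$. Dendriform involution: $()^\dagger=()$ and $(\vec v\vee\vec w)^\dagger=\vec w^\dagger\vee\vec v^\dagger$. *)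

(* Defs.v *)
From mathcomp Require Import all_boot.
Set Implicit Arguments. Unset Strict Implicit. Unset Printing Implicit Defensive.

Definition shift (k : nat) (w : seq nat) : seq nat := map (addn k) w.

Definition vee (vl vr : seq nat) : seq nat := vl ++ 1 :: shift (size vl).+1 vr.

(* \hat N^n : names of planar rooted binary trees with n internal vertices;
   is_name v holds iff v is in \hat N^(size v). *)
Inductive is_name : seq nat -> Prop :=
| is_name_nil : is_name [::]
| is_name_vee vl vr : is_name vl -> is_name vr -> is_name (vee vl vr).

Definition hatN (n : nat) (v : seq nat) : Prop := is_name v /\ size v = n.

Definition tri (n a : nat) : nat := if a == 1 then 1 else a + n.

Definition nearrow (v w : seq nat) : seq nat := v ++ map (tri (size v)) w.
Definition nwarrow (v w : seq nat) : seq nat := v ++ shift (size v) w.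

(* Decomposition v = v_l \vee v_r of a nonempty name: the 1 separating v_l
   from p+1+v_r is the last entry equal to 1 (entries of p+1+v_r are >= p+2). *)
Definition split_pos (v : seq nat) : nat := (size v).-1 - index 1 (rev v).
Definition lpart (v : seq nat) : seq nat := take (split_pos v) v.
Definition rpart (v : seq nat) : seq nat :=
  map (fun a => a - (split_pos v).+1) (drop (split_pos v).+1 v).

Fixpoint varpi_rec (k : nat) (v x : seq nat) : seq nat :=
  match k with
  | 0 => [::]
  | k'.+1 => if nilp v then [::]
             else nwarrow (nearrow (varpi_rec k' (lpart v) x) x)
                          (varpi_rec k' (rpart v) x)
  end.
Definition varpi (v x : seq nat) : seq nat := varpi_rec (size v) v x.

Definition ltimes (u v : seq nat) : seq nat := varpi u v.

Fixpoint dagger_rec (k : nat) (v : seq nat) : seq nat :=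
  match k with
  | 0 => [::]
  | k'.+1 => if nilp v then [::]
             else vee (dagger_rec k' (rpart v)) (dagger_rec k' (lpart v))
  end.
Definition dagger (v : seq nat) : seq nat := dagger_rec (size v) v.

(* Main.v *)
Require Import Defs.
From mathcomp Require Import all_boot.
From mathcomp Require Import zify.

Definition posl (v : seq nat) := all (fun a => 0 < a) v.

Lemma shift0 w : shift 0 w = w.
Proof. by elim: w => //= a w ->; rewrite add0n. Qed.

Lemma tri0 a : tri 0 a = a.
Proof. by rewrite /tri; case: eqP => [->|]; rewrite ?addn0. Qed.

Lemma nearrow0 a : nearrow a [::] = a. Proof. by rewrite /nearrow cats0. Qed.
Lemma nearrow0l w : nearrow [::] w = w.
Proof. by rewrite /nearrow /=; elim: w => //= a w ->; rewrite tri0. Qed.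
Lemma nwarrow0 a : nwarrow a [::] = a. Proof. by rewrite /nwarrow cats0. Qed.
Lemma nwarrow0l w : nwarrow [::] w = w.
Proof. by rewrite /nwarrow /= shift0. Qed.

Lemma size_vee l r : size (vee l r) = (size l + size r).+1.
Proof. by rewrite /vee size_cat /= /shift size_map addnS. Qed.
Lemma size_nearrow a b : size (nearrow a b) = size a + size b.
Proof. by rewrite /nearrow size_cat size_map. Qed.
Lemma size_nwarrow a b : size (nwarrow a b) = size a + size b.
Proof. by rewrite /nwarrow size_cat /shift size_map. Qed.

Lemma name_pos v : is_name v -> posl v.
Proof.
elim=> // l r _ Hl _ Hr; rewrite /posl /vee all_cat; rewrite /posl in Hl; rewrite Hl /= /shift all_map.
by apply/allP => y _ /=; lia.
Qed.
Arguments name_pos {v}.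

Lemma nearrow_vee a l r : posl r -> nearrow a (vee l r) = vee (nearrow a l) r.
Proof.
move=> Hr; rewrite /nearrow /vee map_cat /= -catA /= size_cat size_map.
congr (_ ++ _ ++ _ :: _). rewrite /shift -map_comp; apply/eq_in_map => y yr /=.
have := allP Hr y yr => /= Hy.
rewrite /tri; case: eqP => ?; lia.
Qed.

Lemma vee_nwarrow l r c : nwarrow (vee l r) c = vee l (nwarrow r c).
Proof.
rewrite /nwarrow /vee -catA /= size_cat /= /shift size_map map_cat -map_comp.
congr (_ ++ _ :: _ ++ _); apply: eq_map => y /=; lia.
Qed.

Lemma nearrowA a b c : posl c -> nearrow (nearrow a b) c = nearrow a (nearrow b c).
Proof.
move=> Hc; rewrite /nearrow -catA map_cat size_cat size_map -map_comp.
congr (_ ++ _ ++ _); apply/eq_in_map => y yc /=.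
have := allP Hc y yc => /= Hy.
rewrite /tri; case: eqP => ?; case: eqP => ?; lia.
Qed.

Lemma nwarrowA a b c : nwarrow (nwarrow a b) c = nwarrow a (nwarrow b c).
Proof.
rewrite /nwarrow -catA /shift map_cat size_cat size_map -map_comp.
congr (_ ++ _ ++ _); apply: eq_map => y /=; lia.
Qed.

Lemma mixedA a b c : 0 < size b -> posl c ->
  nwarrow (nearrow a b) c = nearrow a (nwarrow b c).
Proof.
move=> Hb Hc; rewrite /nwarrow /nearrow -catA /shift map_cat size_cat size_map -map_comp.
congr (_ ++ _ ++ _); apply/eq_in_map => y yc /=.
have := allP Hc y yc => /= Hy.
rewrite /tri; case: eqP => ?; lia.
Qed.

Lemma lpart_vee l r : posl r -> lpart (vee l r) = l /\ rpart (vee l r) = r.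
Proof.
move=> Hr.
have Hs : split_pos (vee l r) = size l.
  rewrite /split_pos size_vee /vee rev_cat rev_cons cat_rcons index_cat.
  have -> : (1 \in rev (shift (size l).+1 r)) = false.
    apply/negP; rewrite mem_rev => /mapP [y yr Hy].
    have := allP Hr y yr => /=; lia.
  rewrite /= /shift size_rev size_map addn0; lia.
rewrite /lpart /rpart Hs; split; first by rewrite /vee take_size_cat.
rewrite /vee drop_cat ltnNge leqnSn /= subSnn /= drop0 /shift -map_comp.
rewrite (eq_map (g := id)) ?map_id // => y /=; lia.
Qed.

Lemma varpi_fuel x v : is_name v -> forall k k', size v <= k -> size v <= k' ->
  varpi_rec k v x = varpi_rec k' v x.
Proof.
elim=> [|l r Hl IHl Hr IHr] [|k] [|k'] //=; rewrite ?size_vee // => H1 H2.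
have [-> ->] := lpart_vee l r (name_pos Hr).
have -> : nilp (vee l r) = false by rewrite /nilp size_vee.
by rewrite (IHl k k') ?(IHr k k') //; lia.
Qed.

Lemma varpi_vee l r x : is_name l -> is_name r ->
  varpi (vee l r) x = nwarrow (nearrow (varpi l x) x) (varpi r x).
Proof.
move=> Hl Hr; rewrite /varpi size_vee /=.
have [-> ->] := lpart_vee l r (name_pos Hr).
have -> : nilp (vee l r) = false by rewrite /nilp size_vee.
by rewrite (varpi_fuel x l Hl _ (size l)) ?(varpi_fuel x r Hr _ (size r)) //; lia.
Qed.

Lemma dagger_fuel v : is_name v -> forall k k', size v <= k -> size v <= k' ->
  dagger_rec k v = dagger_rec k' v.
Proof.
elim=> [|l r Hl IHl Hr IHr] [|k] [|k'] //=; rewrite ?size_vee // => H1 H2.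
have [-> ->] := lpart_vee l r (name_pos Hr).
have -> : nilp (vee l r) = false by rewrite /nilp size_vee.
by rewrite (IHl k k') ?(IHr k k') //; lia.
Qed.

Lemma dagger_vee l r : is_name l -> is_name r ->
  dagger (vee l r) = vee (dagger r) (dagger l).
Proof.
move=> Hl Hr; rewrite /dagger size_vee /=.
have [-> ->] := lpart_vee l r (name_pos Hr).
have -> : nilp (vee l r) = false by rewrite /nilp size_vee.
by rewrite (dagger_fuel l Hl _ (size l)) ?(dagger_fuel r Hr _ (size r)) //; lia.
Qed.

Lemma name_nearrow a b : is_name a -> is_name b -> is_name (nearrow a b).
Proof.
move=> Ha; elim=> [|l r Hl IHl Hr IHr]; first by rewrite nearrow0.
by rewrite nearrow_vee ?name_pos //; constructor.
Qed.

Lemma name_nwarrow a b : is_name a -> is_name b -> is_name (nwarrow a b).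
Proof.
move=> Ha Hb; elim: Ha => [|l r Hl IHl Hr IHr]; first by rewrite nwarrow0l.
by rewrite vee_nwarrow; constructor.
Qed.

Lemma name_varpi u x : is_name u -> is_name x -> is_name (varpi u x).
Proof.
move=> Hu Hx; elim: Hu => [|l r Hl IHl Hr IHr]; first by constructor.
by rewrite varpi_vee //; apply: name_nwarrow => //; apply: name_nearrow.
Qed.

Ltac nm := repeat first [assumption | apply: name_nearrow | apply: name_nwarrow | apply: name_varpi | constructor].

Lemma size_varpi u x : is_name u -> size (varpi u x) = size u * size x.
Proof.
elim=> [|l r Hl IHl Hr IHr] //.
rewrite varpi_vee // size_nwarrow size_nearrow IHl IHr size_vee; lia.
Qed.

Lemma name_dagger v : is_name v -> is_name (dagger v) /\ size (dagger v) = size v.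
Proof.
elim=> [|l r Hl [IHl Sl] Hr [IHr Sr]]; first by split; [constructor|].
rewrite dagger_vee // !size_vee Sl Sr addnC; split=> //; by constructor.
Qed.
Arguments name_dagger {v}.

Lemma varpi_nearrow w a b : is_name w -> 0 < size w -> is_name a -> is_name b ->
  varpi (nearrow a b) w = nearrow (varpi a w) (varpi b w).
Proof.
move=> Hw Sw Ha; elim=> [|l r Hl IHl Hr IHr]; first by rewrite nearrow0 nearrow0.
rewrite nearrow_vee ?name_pos // varpi_vee; try nm.
rewrite IHl varpi_vee; try nm.
rewrite nearrowA ?name_pos // mixedA; try nm.
  by rewrite size_nearrow; lia.
all: apply: name_pos; nm.
Qed.

Lemma varpi_nwarrow w a b : is_name w -> is_name a -> is_name b ->
  varpi (nwarrow a b) w = nwarrow (varpi a w) (varpi b w).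
Proof.
move=> Hw Ha Hb; elim: Ha => [|l r Hl IHl Hr IHr]; first by rewrite !nwarrow0l.
rewrite vee_nwarrow varpi_vee; try nm.
by rewrite IHr varpi_vee // nwarrowA.
Qed.

Lemma varpiA u v w : is_name u -> is_name v -> is_name w -> 0 < size w ->
  varpi (varpi u v) w = varpi u (varpi v w).
Proof.
move=> Hu Hv Hw Sw; elim: Hu => [|l r Hl IHl Hr IHr] //.
rewrite !varpi_vee; try nm.
rewrite varpi_nwarrow; try nm.
rewrite varpi_nearrow; try nm.
by rewrite IHl IHr.
Qed.

Lemma dagger_nearrow u v : is_name u -> is_name v ->
  dagger (nearrow u v) = nwarrow (dagger v) (dagger u).
Proof.
move=> Hu; elim=> [|l r Hl IHl Hr IHr]; first by rewrite nearrow0 nwarrow0l.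
rewrite nearrow_vee ?name_pos // dagger_vee; try nm.
rewrite IHl dagger_vee //.
by rewrite vee_nwarrow.
Qed.

Lemma dagger_nwarrow u v : is_name u -> is_name v ->
  dagger (nwarrow u v) = nearrow (dagger v) (dagger u).
Proof.
move=> Hu Hv; elim: Hu => [|l r Hl IHl Hr IHr]; first by rewrite nwarrow0l nearrow0.
rewrite vee_nwarrow dagger_vee; try nm.
rewrite IHr dagger_vee //.
by rewrite nearrow_vee // name_pos //; case: (name_dagger Hl).
Qed.

Theorem mainTheorem8 :
  (* (i) ltimes maps \hat N^n x \hat N^m into \hat N^{nm} (n, m >= 1) *)
  (forall (n m : nat) (u v : seq nat), 1 <= n -> 1 <= m ->
      hatN n u -> hatN m v -> hatN (n * m) (ltimes u v)) /\
  (* associativity on \hat N^bullet_* *)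
  (forall u v w : seq nat,
      is_name u -> is_name v -> is_name w ->
      0 < size u -> 0 < size v -> 0 < size w ->
      ltimes (ltimes u v) w = ltimes u (ltimes v w)) /\
  (* left distributivity on \hat N^bullet_* *)
  (forall u v w : seq nat,
      is_name u -> is_name v -> is_name w ->
      0 < size u -> 0 < size v -> 0 < size w ->
      ltimes (nearrow u v) w = nearrow (ltimes u w) (ltimes v w) /\
      ltimes (nwarrow u v) w = nwarrow (ltimes u w) (ltimes v w)) /\
  (* (ii) *)
  (forall u v : seq nat, is_name u -> is_name v ->
      dagger (nearrow u v) = nwarrow (dagger v) (dagger u) /\
      dagger (nwarrow u v) = nearrow (dagger v) (dagger u)) /\
  (forall u v : seq nat, is_name u -> is_name v -> 0 < size v ->
      dagger (ltimes u v) = ltimes (dagger u) (dagger v)).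
Proof.
split.
  move=> n m u v _ _ [Hu <-] [Hv <-]; split; first exact: name_varpi.
  exact: size_varpi.
split.
  by move=> u v w Hu Hv Hw _ _ Sw; apply: varpiA.
split.
  move=> u v w Hu Hv Hw _ _ Sw; split; first exact: varpi_nearrow.
  exact: varpi_nwarrow.
split.
  by move=> u v Hu Hv; split; [apply: dagger_nearrow | apply: dagger_nwarrow].
move=> u v Hu Hv Sv; rewrite /ltimes.
have [Dv SDv] := name_dagger Hv.
elim: Hu => [|l r Hl IHl Hr IHr] //.
have [Dl _] := name_dagger Hl; have [Dr _] := name_dagger Hr.
rewrite varpi_vee // dagger_nwarrow; try nm.
rewrite dagger_nearrow; try nm.
rewrite IHl IHr dagger_vee // varpi_vee //.
rewrite mixedA ?SDv //; apply: name_pos; nm.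
Qed.
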